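(* Let $R$ be an associative unital division ring over a field $F$ of characteristic $0$, let $\alpha\in F\setminus\{0\}$, $\lambda,\mu\in F$, and let $N,r,s$ be integers with $N>3$ and $1\leq r<s\leq\lfloor N/2\rfloor$. Let $y_M\in R$ be invertible and $\varphi_M\in R$ for $M\in\mathbb{Z}$, and set $\theta_{l,m,n}=y_{(N-s)l+sm+rn}$, $\psi_{l,m,n}=\varphi_{(N-s)l+sm+rn}$ for $(l,m,n)\in\mathbb{Z}^3$. Let $S=\{(N-s)l+sm+rn:(l,m,n)\in\mathbb{Z}^3\}$. (i) For each $(l,m,n)$, with $M=(N-s)l+sm+rn$, the equation $$\theta_{l+1,m+1,n}=\alpha^2\theta_{l,m,n+1}+\theta_{l+1,m,n}\bigl(\theta_{l,m,n}^{-1}-\alpha^2\theta_{l+1,m+1,n-1}^{-1}\bigr)\theta_{l,m+1,n}$$ holds if and only if $$y_{M+N}=\alpha^2y_{M+r}+y_{M+N-s}\bigl(y_M^{-1}-\alpha^2y_{M+N-r}^{-1}\bigr)y_{M+s}.$$ (ii) If for all $(l,m,n)\in\mathbb{Z}^3$ $$\psi_{l+1,m,n}=\mu\psi_{l,m,n+1}+a_{l,m,n}\psi_{l,m,n},\qquad \lambda\psi_{l,m-1,n+1}=\mu\psi_{l,m,n+1}+b_{l,m,n}\psi_{l,m,n},$$ where $a_{l,m,n}=\alpha^{-1}\theta_{l+1,m,n}\theta_{l,m,n}^{-1}$ and $b_{l,m,n}=\alpha\theta_{l,m-1,n+1}\theta_{l,m,n}^{-1}$, then for all $M\in S$ $$\varphi_{M+N-s}=\mu\varphi_{M+r}+a_M\varphi_M,\qquad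 \lambda\varphi_M=\mu\varphi_{M+s}+b_M\varphi_{M+s-r},$$ with $a_M=\alpha^{-1}y_{M+N-s}y_M^{-1}$ and $b_M=\alpha\,y_My_{M+s-r}^{-1}$. *)

(* Defs.v *)
From mathcomp Require Import all_boot all_order all_algebra.
Set Implicit Arguments. Unset Strict Implicit. Unset Printing Implicit Defensive.
Import Order.TTheory GRing.Theory Num.Theory.
Local Open Scope ring_scope.

Definition lat3 {T : Type} (N s r : int) (f : int -> T) (l m n : int) : T :=
  f ((N - s) * l + s * m + r * n).

(* Main.v *)
Require Import Defs.
From mathcomp Require Import all_boot all_order all_algebra.
From mathcomp Require Import ring.
Import Order.TTheory GRing.Theory Num.Theory.
Local Open Scope ring_scope.

Theorem proposition6p1
  (F : fieldType) (R : unitAlgType F)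
  (charF0 : [pchar F] =i pred0)
  (divR : forall x : R, x != 0 -> x \is a GRing.unit)
  (alpha lambda mu : F) (halpha : alpha != 0)
  (N r s : int) (hN : 3 < N) (hr : 1 <= r) (hrs : r < s) (hs : s <= (N %/ 2)%Z)
  (y phi : int -> R) (hy : forall M, y M \is a GRing.unit) :
  let theta := lat3 N s r y in
  let psi := lat3 N s r phi in
  (* (i) *)
  (forall l m n : int,
     let M := (N - s) * l + s * m + r * n in
     theta (l + 1) (m + 1) n =
       alpha ^+ 2 *: theta l m (n + 1)
       + theta (l + 1) m n * ((theta l m n)^-1 - alpha ^+ 2 *: (theta (l + 1) (m + 1) (n - 1))^-1)
         * theta l (m + 1) n
     <->
     y (M + N) =
       alpha ^+ 2 *: y (M + r)
       + y (M + N - s) * ((y M)^-1 - alpha ^+ 2 *: (y (M + N - r))^-1) * y (M + s))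
  /\
  (* (ii) *)
  ((forall l m n : int,
      let a := alpha^-1 *: (theta (l + 1) m n * (theta l m n)^-1) in
      let b := alpha *: (theta l (m - 1) (n + 1) * (theta l m n)^-1) in
      psi (l + 1) m n = mu *: psi l m (n + 1) + a * psi l m n /\
      lambda *: psi l (m - 1) (n + 1) = mu *: psi l m (n + 1) + b * psi l m n) ->
   forall M : int, (exists l m n : int, M = (N - s) * l + s * m + r * n) ->
      let aM := alpha^-1 *: (y (M + N - s) * (y M)^-1) in
      let bM := alpha *: (y M * (y (M + s - r))^-1) in
      phi (M + N - s) = mu *: phi (M + r) + aM * phi M /\
      lambda *: phi M = mu *: phi (M + s) + bM * phi (M + s - r)).
Proof.
move=> theta psi.
have L : forall (f : int -> R) l m n k, k = (N - s) * l + s * m + r * n -> lat3 N s r f l m n = f k.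
  by move=> f l m n k ->.
split.
  move=> l m n M.
  rewrite /theta (L y (l+1) (m+1) n (M+N)); last by rewrite /M; ring.
  rewrite (L y l m (n+1) (M+r)); last by rewrite /M; ring.
  rewrite (L y (l+1) m n (M+N-s)); last by rewrite /M; ring.
  rewrite (L y l m n M) //.
  rewrite (L y (l+1) (m+1) (n-1) (M+N-r)); last by rewrite /M; ring.
  rewrite (L y l (m+1) n (M+s)); last by rewrite /M; ring.
  by [].
move=> H M [l [m [n HM]]] aM bM.
have [H1 _] := H l m n.
have [_ H2] := H l (m+1) (n-1).
move: H1 H2; rewrite /psi /theta.
rewrite (L phi (l+1) m n (M+N-s)); last by rewrite HM; ring.
rewrite (L phi l m (n+1) (M+r)); last by rewrite HM; ring.
rewrite (L phi l m n M) //.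
rewrite (L y (l+1) m n (M+N-s)); last by rewrite HM; ring.
rewrite (L y l m n M) //.
rewrite (L phi l (m+1-1) (n-1+1) M); last by rewrite HM; ring.
rewrite (L phi l (m+1) (n-1+1) (M+s)); last by rewrite HM; ring.
rewrite (L y l (m+1-1) (n-1+1) M); last by rewrite HM; ring.
rewrite (L y l (m+1) (n-1) (M+s-r)); last by rewrite HM; ring.
rewrite (L phi l (m+1) (n-1) (M+s-r)); last by rewrite HM; ring.
by move=> H1 H2; split.
Qed.
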